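(* Let $M=((W,\preccurlyeq,S),V)$ be a temporal equilibrium model of a temporal theory $\Gamma$ and let $\mathrm{Th}(M):=\{\varphi\mid M,(0,0)\models\varphi\}$. For every THT model $M'=((W,\preccurlyeq,S),V')$, if $M',(0,0)\models\Gamma\cup\{\neg\varphi\mid\varphi\notin\mathrm{Th}(M)\}$, then $V((i,1))=V'((i,1))=V'((i,0))$ for all $i\ge0$.
   Context: Fix a countable set $\mathbb{P}$ of atoms. Temporal formulas: $\varphi ::= p\mid\bot\mid\varphi\wedge\varphi\mid\varphi\vee\varphi\mid\varphi\to\varphi\mid\circ\varphi\mid\varphi\,\mathsf{U}\,\varphi\mid\varphi\,\mathsf{R}\,\varphi$; $\neg\varphi:=\varphi\to\bot$. The THT frame is $W=\mathbb{N}\times\{0,1\}$, $(i,h)\preccurlyeq(j,t)$ iff $i=j$ and $h\le t$, $S((i,k))=(i+1,k)$. A THT model is $((W,\preccurlyeq,S),V)$ with $V:W\to2^{\mathbb{P}}$ and $V((i,0))\subseteq V((i,1))$. Satisfaction: $M,w\models p$ iff $p\in V(w)$; $\bot$ never; $\wedge,\vee$ pointwise; $M,w\models\varphi\to\psi$ iff for all $v\succcurlyeq w$, $M,v\models\varphi$ implies $M,v\models\psi$; $M,w\models\circ\varphi$ iff $M,S(w)\models\varphi$; $\varphi\,\mathsf{U}\,\psi$: some $k\ge0$ with $M,S^k(w)\models\psi$ and $M,S^i(w)\models\varphi$ for all $0\le i<k$; $\varphi\,\mathsf{R}\,\psi$: for all $k\ge0$, $M,S^k(w)\models\psi$ or $M,S^i(w)\models\varphi$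 for some $0\le i<k$. $M$ is total if $V((i,0))=V((i,1))$ for all $i$. $M'\le M$ iff $V'((i,1))=V((i,1))$ and $V'((i,0))\subseteq V((i,0))$ for all $i$; $M'<M$ iff $M'\le M$ and $V'\neq V$. A temporal equilibrium model of $\Gamma$ is a total THT model $M$ with $M,(0,0)\models\Gamma$ such that no THT model $M'<M$ has $M',(0,0)\models\Gamma$. *)

(* Defs.v *)
From mathcomp Require Import ssreflect ssrbool eqtype choice.
From Stdlib Require Import Arith.

Set Implicit Arguments.

Inductive formula (A : Type) : Type :=
| Atom : A -> formula A
| Bot : formula A
| And : formula A -> formula A -> formula A
| Or : formula A -> formula A -> formula A
| Imp : formula A -> formula A -> formula A
| Next : formula A -> formula A
| Until : formula A -> formula A -> formula A
| Release : formula A -> formula A -> formula A.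

Arguments Bot {A}.

Definition Neg (A : Type) (phi : formula A) : formula A := Imp phi Bot.

(* A valuation on the THT frame W = nat * {0,1}; the second component is
   encoded by bool (false = 0, true = 1).  The order (i,h) <= (j,t) iff i = j and h <= t, and the
   successor S (i,k) = (i+1,k) are built into [sat] below. *)
Definition valuation (A : Type) := nat -> bool -> A -> Prop.

Definition tht_model (A : Type) (V : valuation A) : Prop :=
  forall i p, V i false p -> V i true p.

Definition hle (h t : bool) : Prop := implb h t = true.

Fixpoint sat (A : Type) (V : valuation A) (i : nat) (h : bool)
  (phi : formula A) {struct phi} : Prop :=
  match phi with
  | Atom p => V i h p
  | Bot => False
  | And a b => sat V i h a /\ sat V i h b
  | Or a b => sat V i h a \/ sat V i h b
  | Imp a b => forall t, hle h t -> sat V i t a -> sat V i t b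
  | Next a => sat V (S i) h a
  | Until a b =>
      exists k, sat V (i + k) h b /\ (forall j, j < k -> sat V (i + j) h a)
  | Release a b =>
      forall k, sat V (i + k) h b \/ (exists j, j < k /\ sat V (i + j) h a)
  end.

Definition sat_theory (A : Type) (V : valuation A) (Gamma : formula A -> Prop)
  : Prop := forall phi, Gamma phi -> sat V 0 false phi.

Definition total (A : Type) (V : valuation A) : Prop :=
  forall i p, V i false p <-> V i true p.

Definition model_le (A : Type) (V' V : valuation A) : Prop :=
  forall i, (forall p, V' i true p <-> V i true p) /\
            (forall p, V' i false p -> V i false p).

Definition model_lt (A : Type) (V' V : valuation A) : Prop :=
  model_le V' V /\ exists i h p, ~ (V' i h p <-> V i h p).

Definition temporal_equilibrium (A : Type) (V : valuation A)
  (Gamma : formula A -> Prop) : Prop :=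
  tht_model V /\ total V /\ sat_theory V Gamma /\
  forall V', tht_model V' -> model_lt V' V -> ~ sat_theory V' Gamma.

Definition Th (A : Type) (V : valuation A) : formula A -> Prop :=
  fun phi => sat V 0 false phi.

(* Main.v *)
Require Import Defs.
From mathcomp Require Import ssreflect ssrbool eqtype choice.
From Stdlib Require Import Classical Arith Lia.

Fixpoint nexts (A : Type) (n : nat) (f : formula A) : formula A :=
  match n with 0 => f | S n => Next (@nexts A n f) end.

Lemma sat_nexts (A : Type) (V : valuation A) n f : forall j h,
  sat V j h (@nexts A n f) <-> sat V (n + j) h f.
Proof.
  induction n as [|n IH]; intros j h; simpl. tauto.
  rewrite IH. replace (n + S j) with (S (n + j)) by lia. tauto.
Qed.

Theorem proposition5p1 (A : countType) (Gamma : formula A -> Prop)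
  (V : valuation A) :
  temporal_equilibrium V Gamma ->
  forall V' : valuation A, tht_model V' ->
    sat_theory V' (fun psi => Gamma psi \/
                     exists phi, ~ Th V phi /\ psi = Neg phi) ->
    forall i, (forall p, V i true p <-> V' i true p) /\
              (forall p, V' i true p <-> V' i false p).
Proof.
  intros [Htm [Htot [Hsat Hmin]]] V' Htm' Hs'.
  assert (Heq : forall i p, V i true p <-> V' i true p).
  { intros i p. split.
    - intro Hp.
      assert (Hin : (fun psi => Gamma psi \/ exists phi, ~ Th V phi /\ psi = Neg phi)
                      (Neg (Neg (@nexts A i (Atom p))))).
      { right. exists (Neg (@nexts A i (Atom p))). split; [|reflexivity].
        unfold Th; simpl. intro Hc. apply (Hc false (Logic.eq_refl _)).
        apply sat_nexts. simpl. rewrite Nat.add_0_r. apply Htot. exact Hp. }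
      assert (H := Hs' _ Hin). simpl in H.
      apply NNPP. intro Hn. apply (H true (Logic.eq_refl _)).
      intros t Ht Hx. destruct t; [|discriminate].
      apply sat_nexts in Hx. simpl in Hx. rewrite Nat.add_0_r in Hx. tauto.
    - intro Hp. apply NNPP. intro Hn.
      assert (Hin : (fun psi => Gamma psi \/ exists phi, ~ Th V phi /\ psi = Neg phi)
                      (Neg (@nexts A i (Atom p)))).
      { right. exists (@nexts A i (Atom p)). split; [|reflexivity].
        unfold Th. intro Hc. apply sat_nexts in Hc. simpl in Hc.
        rewrite Nat.add_0_r in Hc. apply Hn, Htot, Hc. }
      assert (H := Hs' _ Hin). simpl in H.
      apply (H true (Logic.eq_refl _)).
      apply sat_nexts. simpl. rewrite Nat.add_0_r. exact Hp. }
  intro i. split; [apply Heq|]. intro p. split; [|apply Htm'].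
  intro Hp. apply NNPP. intro Hn.
  apply (Hmin V' Htm'); [|intros phi Hphi; apply Hs'; left; exact Hphi].
  split.
  - intro j. split.
    + intro q. split; apply Heq.
    + intros q Hq. apply Htot, Heq, Htm', Hq.
  - exists i, false, p. intro Hc. apply Hn, Hc, Htot, Heq, Hp.
Qed.
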